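(* Let $G=(V,E)$ be a graph and $\mathcal{U}$ a set of utter cliques of $G$ such that $\bigcup_{[W,F]\in\mathcal{U}}E(W)=E$. Then the extended incidence vectors $(\chi^S,\zeta^{E(S)})$ of the co-2-plexes $S$ of $G$ are exactly the vectors $(x,y)\in\{0,1\}^V\times\{0,1\}^E$ satisfying $x(W)+y(F\cap E(V\setminus W))-y(E(W))\le 1$ for all $[W,F]\in\mathcal{U}$ and $y(\delta(v))\le x_v$ for all $v\in V$.
   Context: For $W\subseteq V$, $E(W)$ is the set of edges with both endpoints in $W$, $\delta(v)$ the set of edges incident to $v$, $x(A)=\sum_{a\in A}x_a$. A co-2-plex is a set $S\subseteq V$ such that $G[S]$ has maximum degree at most 1. The utter graph $u(G)$ has vertex set $V\cup E$, where two elements are adjacent iff: they are two adjacent vertices of $G$; or a vertex and an edge incident to it; or two edges sharing an endpoint; or a vertex $w$ and an edge $uv$ not containing $w$ with $wu\in E$ or $wv\in E$; or two disjoint edges $uv,xy$ such that some edge of $G$ joins $\{u,v\}$ to $\{x,y\}$. For $W\subseteq V$, $F\subseteq E$, $[W,F]$ is an utter clique if $W\cup F$ is a clique of $u(G)$. *)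

(* Defs.v *)
(* A graph G = (V,E) is a finite simple graph given by a
   symmetric irreflexive relation e on a finType T (= V). An edge is a
   2-element vertex set {u,v} with e u v. *)
From HB Require Import structures.
From mathcomp Require Import all_boot all_order all_algebra.
Set Implicit Arguments. Unset Strict Implicit. Unset Printing Implicit Defensive.
Import Order.TTheory GRing.Theory Num.Theory.

Section Graph.
Variables (T : finType) (e : rel T).

Definition is_edge (A : {set T}) : bool :=
  [exists u, exists v, e u v && (A == [set u; v])].

Definition edge : Type := {A : {set T} | is_edge A}.
HB.instance Definition _ := Finite.on edge.

Definition Eof (W : {set T}) : {set edge} := [set f : edge | val f \subset W].

Definition delta (v : T) : {set edge} := [set f : edge | v \in val f].

Definition co2plex (S : {set T}) : Prop :=
  forall v, v \in S -> #|[set u in S | e v u]| <= 1.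

Definition utter_adj (a b : T + edge) : bool :=
  match a, b with
  | inl u, inl v => e u v
  | inl w, inr f | inr f, inl w =>
      (w \in val f) || ((w \notin val f) && [exists u in val f, e w u])
  | inr f, inr g =>
      (f != g) &&
      ([exists u, (u \in val f) && (u \in val g)] ||
       ([disjoint val f & val g] &&
        [exists u in val f, exists x in val g, e u x]))
  end.

Definition utter_clique (W : {set T}) (F : {set edge}) : Prop :=
  forall a b : T + edge,
    match a with inl v => v \in W | inr f => f \in F end ->
    match b with inl v => v \in W | inr f => f \in F end ->
    a != b -> utter_adj a b.

Definition chi (S : {set T}) : {ffun T -> int} := [ffun v => Posz (v \in S : nat)].
Definition zeta (A : {set edge}) : {ffun edge -> int} :=
  [ffun f => Posz (f \in A : nat)].

End Graph.

(* Main.v *)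
Require Import Defs.
From HB Require Import structures.
From mathcomp Require Import all_boot all_order all_algebra zify.
Import Order.TTheory GRing.Theory Num.Theory.
Set Implicit Arguments. Unset Strict Implicit.
Local Open Scope nat_scope.

Lemma sum_ind (I : finType) (A B : {set I}) :
  (\sum_(i in A) Posz (i \in B : nat) = Posz #|A :&: B|)%R.
Proof.
rewrite -(big_morph Posz PoszD (id1 := 0%R) (id2 := 0%N)) //; congr Posz.
rewrite -sum1_card [RHS]big_mkcond [LHS]big_mkcond /=; apply: eq_bigr => i _; rewrite inE.
by case: (i \in A); case: (i \in B).
Qed.

Section G.
Variables (T : finType) (e : rel T) (e_sym : symmetric e) (e_irr : irreflexive e).

Lemma mkedge_proof u v : e u v -> is_edge e [set u; v].
Proof. by move=> h; apply/existsP; exists u; apply/existsP; exists v; rewrite h eqxx. Qed.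

Definition mkedge u v (h : e u v) : edge e := exist _ [set u; v] (mkedge_proof h).

Lemma edgeP (f : edge e) : exists u v, e u v /\ val f = [set u; v].
Proof. by case: f => A /= /existsP[u /existsP[v /andP[h /eqP->]]]; exists u, v. Qed.

Lemma edge_other v (f : edge e) : v \in val f -> exists u, e v u /\ val f = [set v; u].
Proof.
have [a [b [hab ->]]] := edgeP f.
rewrite !inE => /orP[]/eqP->; first by exists b.
by exists a; rewrite e_sym hab setUC.
Qed.

Lemma neq_of_e u v : e u v -> u != v.
Proof. by apply: contraTneq => ->; rewrite e_irr. Qed.

Lemma card_edge (f : edge e) : #|val f| = 2.
Proof. by have [a [b [hab ->]]] := edgeP f; rewrite cards2 neq_of_e. Qed.


Lemma two_nbrs S u a b : co2plex e S -> u \in S -> a \in S -> b \in S ->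
  e u a -> e u b -> a = b.
Proof.
move=> hS hu ha hb hua hub.
have /card_le1_eqP := hS u hu; apply; by rewrite inE ?ha ?hb.
Qed.

Lemma fwd_delta S v : co2plex e S -> #|delta e v :&: Eof e S| <= (v \in S).
Proof.
move=> hS; case hv: (v \in S).
  apply/card_le1_eqP => f g; rewrite !inE => /andP[hf fS] /andP[hg gS].
  have [a [hva ef]] := edge_other hf; have [b [hvb eg]] := edge_other hg.
  have aS : a \in S by apply: (subsetP fS); rewrite ef !inE eqxx orbT.
  have bS : b \in S by apply: (subsetP gS); rewrite eg !inE eqxx orbT.
  have hab := two_nbrs hS hv aS bS hva hvb.
  by apply: val_inj; rewrite ef eg hab.
rewrite leqn0 cards_eq0; apply/eqP/setP => f; rewrite !inE.
apply/negP => /andP[hf fS]; by rewrite (subsetP fS _ hf) in hv.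
Qed.

Lemma fwd_clique S W F : co2plex e S -> @utter_clique T e W F ->
  #|W :&: S| + #|(F :&: Eof e (~: W)) :&: Eof e S| <= #|Eof e W :&: Eof e S| + 1.
Proof.
move=> hS hC.
have cl : forall a b, a \in W -> b \in W -> a != b -> e a b.
  by move=> a b ha hb hab; exact: (hC (inl a) (inl b) ha hb hab).
have hA2 : #|W :&: S| <= 2.
  case: (set_0Vmem (W :&: S)) => [->|[a ha]]; first by rewrite cards0.
  rewrite (cardsD1 a) ha add1n ltnS.
  have : (W :&: S) :\ a \subset [set u in S | e a u].
    apply/subsetP => u; rewrite !inE => /andP[hua /andP[uW uS]].
    move: ha; rewrite !inE => /andP[aW aS].
    by rewrite uS cl // eq_sym.
  move/subset_leq_card => h; apply: leq_trans h _.
  by apply: hS; move: ha; rewrite !inE => /andP[].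
have hAC : 2 <= #|W :&: S| -> 0 < #|Eof e W :&: Eof e S|.
  rewrite -ltnS => /card_gt1P[a [b [ha hb hab]]].
  move: ha hb; rewrite !inE => /andP[aW aS] /andP[bW bS].
  have h := cl a b aW bW hab.
  apply/card_gt0P; exists (mkedge h); rewrite !inE /=.
  by rewrite !subUset !sub1set aW bW aS bS.
have hB1 : #|(F :&: Eof e (~: W)) :&: Eof e S| <= 1.
  apply/card_le1_eqP => f g; rewrite !inE => /andP[/andP[fF fW] fS] /andP[/andP[gF gW] gS].
  case: (eqVneq f g) => // hfg.
  have /andP[_] := hC (inr f) (inr g) fF gF hfg.
  case/orP.
    case/existsP => u /andP[uf ug].
    have [a [hua ef]] := edge_other uf; have [b [hub eg]] := edge_other ug.
    have uS : u \in S by apply: (subsetP fS).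
    have aS : a \in S by apply: (subsetP fS); rewrite ef !inE eqxx orbT.
    have bS : b \in S by apply: (subsetP gS); rewrite eg !inE eqxx orbT.
    have hab := two_nbrs hS uS aS bS hua hub.
    by move: hfg; have -> : f = g by apply: val_inj; rewrite ef eg hab.
  case/andP => hdis /existsP[u /andP[uf /existsP[w /andP[wg huw]]]].
  have [a [hua ef]] := edge_other uf.
  have uS : u \in S by apply: (subsetP fS).
  have aS : a \in S by apply: (subsetP fS); rewrite ef !inE eqxx orbT.
  have wS : w \in S by apply: (subsetP gS).
  have haw := two_nbrs hS uS aS wS hua huw.
  have af : a \in val f by rewrite ef !inE eqxx orbT.
  by move: (disjointFr hdis af); rewrite haw wg.
have hAB : 0 < #|W :&: S| -> #|(F :&: Eof e (~: W)) :&: Eof e S| = 0.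
  case/card_gt0P => w; rewrite !inE => /andP[wW wS].
  apply/eqP; rewrite cards_eq0; apply/eqP/setP => f; rewrite !inE.
  apply/negP => /andP[/andP[fF fW] fS].
  have := hC (inl w) (inr f) wW fF isT; rewrite /=.
  case/orP => [wf|/andP[_ /existsP[u /andP[uf hwu]]]].
    by move: (subsetP fW _ wf); rewrite inE wW.
  have [a [hua ef]] := edge_other uf.
  have uS : u \in S by apply: (subsetP fS).
  have af : a \in val f by rewrite ef !inE eqxx orbT.
  have aS : a \in S by apply: (subsetP fS).
  rewrite e_sym in hwu.
  have haw := two_nbrs hS uS aS wS hua hwu.
  by move: (subsetP fW _ af); rewrite inE haw wW.
move: hA2 hAC hB1 hAB; set A := #|W :&: S|; set B := #|_ :&: Eof e S|; set C := #|_ :&: _|.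
case: A => [|[|[|]]] //=; try lia.
Qed.


Section Rev.
Variables (S : {set T}) (Y : {set edge e}).
Hypothesis H2 : forall v, #|delta e v :&: Y| <= (v \in S).

Lemma match1 v f g : f \in Y -> g \in Y -> v \in val f -> v \in val g -> f = g.
Proof.
move=> fY gY vf vg.
have /card_le1_eqP : #|delta e v :&: Y| <= 1 by apply: leq_trans (H2 v) _; case: (v \in S).
by apply; rewrite !inE ?fY ?gY ?vf ?vg.
Qed.

Lemma YsubS : Y \subset Eof e S.
Proof.
apply/subsetP => f fY; rewrite inE; apply/subsetP => v vf.
have : 0 < #|delta e v :&: Y| by apply/card_gt0P; exists f; rewrite !inE vf fY.
move=> h; move: (leq_trans h (H2 v)); by case: (v \in S).
Qed.

Lemma rev_cover W : Eof e W :&: Y \subset Eof e W :&: Eof e S ->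
  2 * #|Eof e W :&: Y| <= #|W :&: S|.
Proof.
move=> _.
pose Z := Eof e W :&: Y.
pose P := [set val g | g in Z].
change (2 * #|Z| <= #|W :&: S|).
have tP : trivIset P.
  apply/trivIsetP => A B /imsetP[f fZ ->] /imsetP[g gZ ->] hfg.
  apply/pred0P => v /=; apply/negP => /andP[vf vg].
  move: fZ gZ; rewrite !inE => /andP[_ fY] /andP[_ gY].
  by move: hfg; rewrite (match1 fY gY vf vg) eqxx.
have hc : #|cover P| = 2 * #|Z|.
  rewrite -(eqP tP) (eq_bigr (fun _ => 2)); last first.
    by move=> B /imsetP[g _ ->]; rewrite card_edge.
  by rewrite sum_nat_const card_imset 1?mulnC //; exact: val_inj.
rewrite -hc; apply: subset_leq_card; apply/subsetP => v /bigcupP[B /imsetP[g gZ ->] vg].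
move: gZ; rewrite !inE => /andP[gW gY]; rewrite (subsetP gW _ vg) /=.
have := subsetP YsubS g gY; rewrite inE => /subsetP; exact.
Qed.

End Rev.

End G.

Local Open Scope ring_scope.

Theorem mainTheorem15 (T : finType) (e : rel T)
  (e_sym : symmetric e) (e_irr : irreflexive e)
  (U : {set {set T} * {set edge e}})
  (hU : forall p, p \in U -> utter_clique p.1 p.2)
  (hcov : \bigcup_(p in U) Eof e p.1 = [set: edge e])
  (x : {ffun T -> int}) (y : {ffun edge e -> int})
  (hx : forall v, x v = 0 \/ x v = 1)
  (hy : forall f, y f = 0 \/ y f = 1) :
  (exists S : {set T}, co2plex e S /\ x = chi S /\ y = zeta (Eof e S)) <->
  ((forall p, p \in U ->
      \sum_(v in p.1) x v + \sum_(f in p.2 :&: Eof e (~: p.1)) y f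
        - \sum_(f in Eof e p.1) y f <= 1) /\
   (forall v, \sum_(f in delta e v) y f <= x v)).
Proof.
split.
  move=> [S [hS [-> ->]]]; split.
    move=> p /hU hC; rewrite /chi /zeta.
    under eq_bigr do rewrite ffunE.
    under [X in _ + X - _]eq_bigr do rewrite ffunE.
    under [X in _ - X]eq_bigr do rewrite ffunE.
    rewrite !sum_ind.
    have := fwd_clique e_sym hS hC; lia.
  move=> v; rewrite /chi /zeta; under eq_bigr do rewrite ffunE.
  rewrite sum_ind ffunE; have := fwd_delta e_sym v hS; lia.
move=> [H1 H2'].
pose S := [set v | x v == 1]; pose Y := [set f | y f == 1].
have hxS : x = chi S.
  by apply/ffunP => v; rewrite ffunE inE; case: (hx v) => ->.
have hyY : y = zeta Y.
  by apply/ffunP => v; rewrite ffunE inE; case: (hy v) => ->.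
rewrite {}hxS {}hyY in H1 H2' *.
clearbody S Y.
have H2 : forall v, (#|delta e v :&: Y| <= (v \in S))%N.
  move=> v; have := H2' v; rewrite /chi /zeta; under eq_bigr do rewrite ffunE.
  by rewrite sum_ind ffunE lez_nat.
have H1n : forall p, p \in U -> (#|p.1 :&: S| <= #|Eof e p.1 :&: Y| + 1)%N.
  move=> p pU; have := H1 p pU; rewrite /chi /zeta.
  under eq_bigr do rewrite ffunE.
  under [X in _ + X - _]eq_bigr do rewrite ffunE.
  under [X in _ - X]eq_bigr do rewrite ffunE.
  rewrite !sum_ind; lia.
have YsS := YsubS H2.
have YeqS : Y = Eof e S.
  apply/eqP; rewrite eqEsubset YsS /=; apply/subsetP => f fS.
  have : f \in \bigcup_(p in U) Eof e p.1 by rewrite hcov inE.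
  case/bigcupP => p pU fW.
  have hk : (2 <= #|p.1 :&: S|)%N.
    rewrite -(card_edge e_irr f); apply: subset_leq_card.
    by move: fW fS; rewrite !inE subsetI => -> ->.
  have hm := rev_cover e_irr H2 (W := p.1) (setIS _ YsS).
  have := H1n p pU => hkm.
  have : (0 < #|Eof e p.1 :&: Y|)%N.
    move: hk hm hkm; generalize #|p.1 :&: S|, #|Eof e p.1 :&: Y|; lia.
  case/card_gt0P => g; rewrite inE => /andP[gW gY].
  have gS := subsetP YsS g gY; rewrite inE in gS.
  have k2 : (#|p.1 :&: S| <= 2)%N.
    move: hm hkm; generalize #|p.1 :&: S|, #|Eof e p.1 :&: Y|; lia.
  have eqf : val f = p.1 :&: S.
    apply/eqP; rewrite eqEcard (card_edge e_irr f).
    move: fW fS; rewrite !inE subsetI => -> -> /=; exact: k2.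
  have eqg : val g = p.1 :&: S.
    apply/eqP; rewrite eqEcard (card_edge e_irr g).
    move: gW; rewrite !inE subsetI => -> /=; rewrite gS /=; exact: k2.
  by have -> : f = g by apply: val_inj; rewrite eqf eqg.
exists S; split; last by rewrite YeqS.
move=> v vS; apply/card_le1_eqP => a b; rewrite !inE => /andP[aS va] /andP[bS vb].
have faY : mkedge va \in Y by rewrite YeqS inE /= subUset !sub1set vS aS.
have fbY : mkedge vb \in Y by rewrite YeqS inE /= subUset !sub1set vS bS.
have := match1 H2 faY fbY (v := v); rewrite /= !inE !eqxx => /(_ isT isT) /(congr1 val) /= hab.
have : a \in [set v; b] by rewrite -hab !inE eqxx orbT.
rewrite !inE => /orP[/eqP hav|/eqP //].
by move: (neq_of_e e_irr va); rewrite hav eqxx.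
Qed.
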